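(* Let $n\ge1$ and $k_1,\dots,k_n\in\mathbb N$, and write $W_a=\chi_{k_1}\circ\cdots\circ\chi_{k_n}(a)$ for $a\in\{1,2,3\}$. Then: (i) $W_3$ is a prefix of $W_2$; (ii) if $k_n\ge2$, then the word obtained from $W_1$ by deleting its last letter is a prefix of $W_3$, and the last letter of $W_1$ is $1$ if $n$ is even and $2$ if $n$ is odd; (iii) if $k_n=1$ and $n\ge2$, then $W_3$ is a prefix of $W_1$.
   Context: For $k\in\mathbb N$, $\chi_k$ is the substitution on the alphabet $\{1,2,3\}$ given by $1\mapsto2$, $2\mapsto31^k$, $3\mapsto31^{k-1}$, extended to words by concatenation. *)

(* Defs.v *)
From mathcomp Require Import all_boot.
Set Implicit Arguments. Unset Strict Implicit. Unset Printing Implicit Defensive.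

(* The substitution chi_k on letters: 1 -> 2, 2 -> 3 1^k, 3 -> 3 1^(k-1).
   (Values on other naturals are irrelevant and set to the empty word.) *)
Definition chi (k : nat) (a : nat) : seq nat :=
  match a with
  | 1 => [:: 2]
  | 2 => 3 :: nseq k 1
  | 3 => 3 :: nseq k.-1 1
  | _ => [::]
  end.

Definition chi_word (k : nat) (w : seq nat) : seq nat := flatten (map (chi k) w).

(* W ks a = chi_{k_1} o ... o chi_{k_n} (a) for ks = [:: k_1; ...; k_n]
   (chi_{k_n} is applied first). *)
Definition W (ks : seq nat) (a : nat) : seq nat :=
  foldr chi_word [:: a] ks.

(* Main.v *)
Require Import Defs.
From mathcomp Require Import all_boot.

Definition Wl (ks : seq nat) (w : seq nat) := foldr chi_word w ks.

Lemma chi_word_cat k u v : chi_word k (u ++ v) = chi_word k u ++ chi_word k v.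
Proof. by rewrite /chi_word map_cat flatten_cat. Qed.

Lemma Wl_cat ks u v : Wl ks (u ++ v) = Wl ks u ++ Wl ks v.
Proof. by elim: ks => //= k ks IH; rewrite IH chi_word_cat. Qed.

Lemma Wl_prefix ks u v : prefix u v -> prefix (Wl ks u) (Wl ks v).
Proof. by case/prefixP => t ->; rewrite Wl_cat prefix_prefix. Qed.

Lemma W_rcons ks k a : W (rcons ks k) a = Wl ks (chi k a).
Proof. by rewrite /W foldr_rcons /= /chi_word /= cats0. Qed.

Lemma nseq_rc n : 3 :: nseq n.+1 1 = rcons (3 :: nseq n 1) 1.
Proof. by elim: n => //= n [->]. Qed.

Lemma W_cons k m a : W (k :: m) a = chi_word k (W m a).
Proof. by []. Qed.

Lemma inv (m : seq nat) : all (fun k => 0 < k) m -> exists P r,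
  (W m 2 = rcons P 2 /\ W m 3 ++ W m 1 = P ++ 3 :: 1 :: r /\ ~~ odd (size m)) \/
  (W m 2 = rcons P 1 /\ W m 3 ++ W m 1 = P ++ 2 :: r /\ odd (size m)).
Proof.
elim: m => [|k m IH] /=; first by exists [::], [::]; left.
case/andP => kp /IH [P [r [[E1 [E2 E3]]|[E1 [E2 E3]]]]].
- case: k kp => // k _.
  exists (chi_word k.+1 P ++ 3 :: nseq k 1), (chi_word k.+1 r); right.

rewrite ?W_cons E1 -cats1 chi_word_cat.
  have -> : chi_word k.+1 [:: 2] = rcons (3 :: nseq k 1) 1.
    by rewrite /chi_word /= cats0 nseq_rc.
  split; first by rewrite rcons_cat.
  split; last by rewrite ?negbK.
  rewrite -chi_word_cat E2 chi_word_cat -catA.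
  by rewrite /chi_word /=.
- case: k kp => // k _.
  exists (chi_word k.+1 P), (nseq k 1 ++ chi_word k.+1 r); left.
  rewrite E1 -cats1 chi_word_cat.
  split; first by rewrite -cats1.
  split; last by rewrite ?negbK.
  by rewrite -chi_word_cat E2 chi_word_cat.
Qed.

Lemma Wl_rcons s k w : Wl (rcons s k) w = Wl s (chi_word k w).
Proof. by rewrite /Wl foldr_rcons. Qed.

Lemma chi_word1 k a : chi_word k [:: a] = chi k a.
Proof. by rewrite /chi_word /= cats0. Qed.

Lemma chi_pref k : 0 < k -> prefix (chi k 3) (chi k 2).
Proof.
case: k => // k _.
have -> : chi k.+1 2 = chi k.+1 3 ++ [:: 1].
  by change (3 :: nseq k.+1 1 = (3 :: nseq k 1) ++ [:: 1]); rewrite nseq_rc cats1.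
exact: prefix_prefix.
Qed.

Theorem lemma3p13 (ks : seq nat) :
  0 < size ks -> all (fun k => 0 < k) ks ->
  [/\ prefix (W ks 3) (W ks 2),
      (2 <= last 0 ks ->
         prefix (take (size (W ks 1)).-1 (W ks 1)) (W ks 3) /\
         last 0 (W ks 1) = (if odd (size ks) then 2 else 1))
    & (last 0 ks = 1 -> 2 <= size ks -> prefix (W ks 3) (W ks 1))].
Proof.
case/lastP: ks => [//|m kn] _.
rewrite all_rcons => /andP [kp mp].
rewrite last_rcons size_rcons !W_rcons.
split.
- by apply: Wl_prefix; apply: chi_pref.
- case: kn kp => [|[|k]] //= _ _.
  have -> : 3 :: 1 :: nseq k 1 = [:: 3] ++ [:: 1] ++ nseq k 1 by [].
  rewrite !Wl_cat /=.
  have [P [r [[E1 [E2 E3]]|[E1 [E2 E3]]]]] := inv _ mp;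
    rewrite /Wl -!/(W _ _) E1 -cats1 size_cat addn1 /= take_size_cat //;
    rewrite catA E2 -catA prefix_prefix last_cat /= E3;
    by [].
- move=> -> {kp}; case/lastP: m mp => [//|m k].
  rewrite all_rcons => /andP [kp _] _ /=.
  change (prefix (Wl (rcons m k) [:: 3]) (Wl (rcons m k) [:: 2])).
  rewrite !Wl_rcons !chi_word1.
  by apply: Wl_prefix; apply: chi_pref.
Qed.
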